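(* (i) For any formula $A\in\mathcal{L}_\infty$ and any natural numbers $m,n$ both strictly greater than the index of every box occurring in $A$, $\mathbf{GL}_h\vdash\Box_mA\leftrightarrow\Box_nA$. (ii) For any formula $A$ of the ordinary unimodal language $\mathcal{L}_\Box$ and any witnesses $u,v$ for $A$, $\mathbf{GL}_h\vdash A(u)\rightarrow A(v)$.
   Context: The language $\mathcal{L}_\infty$ consists of modal formulas built from propositional atoms, $\bot,\top$, the connectives $\neg,\wedge,\vee,\rightarrow$ and unary modalities $\Box_n$ ($n\in\mathbb{N}$), with the restriction that $\Box_n A$ is a formula only if $n$ is strictly greater than the index of every box occurring in $A$. Axiom instances are only those that are $\mathcal{L}_\infty$-formulas. Axiom schemes (for all $n\ge0$): $\mathbf{H}$: $\Box_n A\rightarrow\Box_{n+1}A$; $\mathbf{K}_h$: $\Box_n(A\rightarrow B)\rightarrow(\Box_nA\rightarrow\Box_nB)$; $\mathbf{4}_h$: $\Box_nA\rightarrow\Box_{n+1}\Box_nA$; $\mathbf{L}_h$: $\Box_{n+1}(\Box_nA\rightarrow A)\rightarrow\Box_nA$. $\mathbf{GL}_h$ is the least set of $\mathcal{L}_\infty$-formulas containing all classical propositional tautologies and all instances of $\mathbf{H},\mathbf{K}_h,\mathbf{4}_h,\mathbf{L}_h$, closed under modus ponens and the rule: from $A$ infer $\Box_nA$ for any $n$ greater than all box indices in $A$. $\mathcal{L}_\Box$ is the usual modal language with one modality $\Box$ (same atoms). A witness for $A\in\mathcal{L}_\Box$ is an assignment of a natural number to each occurrence of $\Box$ in $A$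 such that the number assigned to each occurrence is strictly greater than the numbers assigned to all box occurrences inside its scope (formally: atoms have the empty witness $()$; $(w_1,w_2)$ is a witness for $B\circ C$ if $w_1,w_2$ are witnesses for $B,C$; a witness for $B$ is one for $\neg B$; $(n,w)$ is a witness for $\Box B$ if $w$ is a witness for $B$ and $n$ exceeds every number in $w$). For a witness $w$ of $A$, $A(w)\in\mathcal{L}_\infty$ is obtained by replacing each occurrence of $\Box$ by $\Box_n$, where $n$ is the number assigned to that occurrence. *)

(* Defs.v *)
From Stdlib Require Import Arith Bool.

Inductive form : Type :=
| Var : nat -> form
| Bot : form
| Top : form
| Neg : form -> form
| And : form -> form -> form
| Or  : form -> form -> form
| Imp : form -> form -> form
| Box : nat -> form -> form.

Fixpoint boxes_below (n : nat) (A : form) : Prop :=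
  match A with
  | Var _ | Bot | Top => True
  | Neg B => boxes_below n B
  | And B C | Or B C | Imp B C => boxes_below n B /\ boxes_below n C
  | Box k B => k < n /\ boxes_below n B
  end.

Fixpoint wf (A : form) : Prop :=
  match A with
  | Var _ | Bot | Top => True
  | Neg B => wf B
  | And B C | Or B C | Imp B C => wf B /\ wf C
  | Box k B => boxes_below k B /\ wf B
  end.

Definition Iff (A B : form) : form := And (Imp A B) (Imp B A).

(* classical propositional evaluation, treating atoms and boxed formulas
   as propositional variables *)
Fixpoint peval (v : form -> bool) (A : form) : bool :=
  match A with
  | Var p => v (Var p)
  | Bot => false
  | Top => true
  | Neg B => negb (peval v B)
  | And B C => peval v B && peval v C
  | Or B C => peval v B || peval v C
  | Imp B C => implb (peval v B) (peval v C)
  | Box k B => v (Box k B)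
  end.

Definition tautology (A : form) : Prop := forall v, peval v A = true.

Inductive GLh : form -> Prop :=
| GLh_taut : forall A, wf A -> tautology A -> GLh A
| GLh_H : forall n A, wf (Imp (Box n A) (Box (S n) A)) ->
    GLh (Imp (Box n A) (Box (S n) A))
| GLh_K : forall n A B,
    wf (Imp (Box n (Imp A B)) (Imp (Box n A) (Box n B))) ->
    GLh (Imp (Box n (Imp A B)) (Imp (Box n A) (Box n B)))
| GLh_4 : forall n A, wf (Imp (Box n A) (Box (S n) (Box n A))) ->
    GLh (Imp (Box n A) (Box (S n) (Box n A)))
| GLh_L : forall n A, wf (Imp (Box (S n) (Imp (Box n A) A)) (Box n A)) ->
    GLh (Imp (Box (S n) (Imp (Box n A) A)) (Box n A))
| GLh_MP : forall A B, GLh A -> GLh (Imp A B) -> GLh B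
| GLh_nec : forall n A, GLh A -> boxes_below n A -> GLh (Box n A).

Inductive uform : Type :=
| UVar : nat -> uform
| UBot : uform
| UTop : uform
| UNeg : uform -> uform
| UAnd : uform -> uform -> uform
| UOr  : uform -> uform -> uform
| UImp : uform -> uform -> uform
| UBox : uform -> uform.

(* witnesses: () , (w1,w2) , (n,w) *)
Inductive wit : Type :=
| WNil : wit
| WPair : wit -> wit -> wit
| WBox : nat -> wit -> wit.

Fixpoint wit_below (n : nat) (w : wit) : Prop :=
  match w with
  | WNil => True
  | WPair w1 w2 => wit_below n w1 /\ wit_below n w2
  | WBox k w' => k < n /\ wit_below n w'
  end.

Fixpoint is_witness (A : uform) (w : wit) : Prop :=
  match A, w with
  | UVar _, WNil | UBot, WNil | UTop, WNil => True
  | UNeg B, _ => is_witness B w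
  | UAnd B C, WPair w1 w2 | UOr B C, WPair w1 w2 | UImp B C, WPair w1 w2 =>
      is_witness B w1 /\ is_witness C w2
  | UBox B, WBox n w' => is_witness B w' /\ wit_below n w'
  | _, _ => False
  end.

(* A(w); junk (Bot) on structurally mismatched witnesses *)
Fixpoint translate (A : uform) (w : wit) : form :=
  match A, w with
  | UVar p, _ => Var p
  | UBot, _ => Bot
  | UTop, _ => Top
  | UNeg B, _ => Neg (translate B w)
  | UAnd B C, WPair w1 w2 => And (translate B w1) (translate C w2)
  | UOr B C, WPair w1 w2 => Or (translate B w1) (translate C w2)
  | UImp B C, WPair w1 w2 => Imp (translate B w1) (translate C w2)
  | UBox B, WBox n w' => Box n (translate B w')
  | _, _ => Bot
  end.

(* Main.v *)
Require Import Defs.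
From Stdlib Require Import Arith Bool Lia.

Lemma bb_mono : forall A n m, boxes_below n A -> n <= m -> boxes_below m A.
Proof. induction A; simpl; intros; try tauto; try (destruct H; split; eauto; lia); eauto. Qed.

Lemma wf_GLh : forall A, GLh A -> wf A.
Proof.
  induction 1; simpl in *; try tauto.
Qed.

Ltac taut := let w := fresh "w" in intro w; simpl;
  repeat match goal with
  | |- context[peval ?u ?X] => destruct (peval u X)
  | |- context[?u (Box ?k ?X)] => destruct (u (Box k X))
  | |- context[?u (Var ?k)] => destruct (u (Var k))
  end; reflexivity.

Ltac wfs := simpl in *; repeat split; intuition (eauto using bb_mono).

Lemma mp1 : forall X Y, GLh X -> wf Y -> tautology (Imp X Y) -> GLh Y.
Proof.
  intros. apply (GLh_MP X); auto. apply GLh_taut; auto. simpl. split; auto. apply wf_GLh; auto.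
Qed.

Lemma mp2 : forall X Y Z, GLh X -> GLh Y -> wf Z -> tautology (Imp X (Imp Y Z)) -> GLh Z.
Proof.
  intros. apply (GLh_MP Y); auto. apply (GLh_MP X); auto. apply GLh_taut; auto.
  pose proof (wf_GLh _ H). pose proof (wf_GLh _ H0). simpl; tauto.
Qed.

Lemma trans : forall X Y Z, GLh (Imp X Y) -> GLh (Imp Y Z) -> GLh (Imp X Z).
Proof.
  intros. pose proof (wf_GLh _ H). pose proof (wf_GLh _ H0). simpl in *.
  apply (mp2 _ _ _ H H0). simpl; tauto. taut.
Qed.

Lemma refl : forall X, wf X -> GLh (Imp X X).
Proof. intros. apply GLh_taut. simpl; tauto. taut. Qed.

Lemma up_chain : forall A m n, wf A -> boxes_below m A -> m <= n ->
  GLh (Imp (Box m A) (Box n A)).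
Proof.
  intros A m n HA Hb Hle. induction Hle.
  - apply refl. simpl; tauto.
  - eapply trans; [exact IHHle|]. apply GLh_H. wfs; lia.
Qed.

Lemma down : forall A k, wf A -> boxes_below k A -> GLh (Imp (Box (S k) A) (Box k A)).
Proof.
  intros A k HA Hb.
  assert (Hb' : boxes_below (S k) A) by eauto using bb_mono.
  assert (t1 : GLh (Imp A (Imp (Box k A) A))). { apply GLh_taut. wfs. taut. }
  assert (t2 := GLh_nec (S k) _ t1 ltac:(wfs)).
  assert (t3 : GLh (Imp (Box (S k) A) (Box (S k) (Imp (Box k A) A)))).
  { eapply GLh_MP; [exact t2|]. apply GLh_K. wfs. }
  eapply trans; [exact t3|]. apply GLh_L. wfs.
Qed.

Lemma down_chain : forall A m n, wf A -> boxes_below m A -> m <= n ->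
  GLh (Imp (Box n A) (Box m A)).
Proof.
  intros A m n HA Hb Hle. induction Hle.
  - apply refl. simpl; tauto.
  - eapply trans; [|exact IHHle]. apply down; eauto using bb_mono.
Qed.

Lemma part1 : forall (A : form) (m n : nat), wf A -> boxes_below m A -> boxes_below n A ->
     GLh (Iff (Box m A) (Box n A)).
Proof.
  intros. unfold Iff. destruct (le_ge_dec m n).
  - apply (mp2 _ _ _ (up_chain A m n H H0 l) (down_chain A m n H H0 l)). wfs. taut.
  - apply (mp2 _ _ _ (down_chain A n m H H1 g) (up_chain A n m H H1 g)). wfs. taut.
Qed.

Lemma tr_bb : forall A w n, is_witness A w -> wit_below n w -> boxes_below n (translate A w).
Proof.
  induction A; intros w n0 Hw Hb; destruct w; simpl in *; intuition; apply IHA; simpl; auto.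
Qed.

Lemma tr_wf : forall A w, is_witness A w -> wf (translate A w).
Proof.
  induction A; intros w Hw; destruct w; simpl in *; intuition.
  apply tr_bb; auto.
Qed.

Lemma part2 : forall (A : uform) (u v : wit), is_witness A u -> is_witness A v ->
     GLh (Imp (translate A u) (translate A v)).
Proof.
  induction A; intros u v Hu Hv.
  - destruct u, v; simpl in *; try contradiction; apply refl; simpl; auto.
  - destruct u, v; simpl in *; try contradiction; apply refl; simpl; auto.
  - destruct u, v; simpl in *; try contradiction; apply refl; simpl; auto.
  - simpl in *. pose proof (IHA v u Hv Hu).
    apply (mp1 _ _ H). simpl. split; apply tr_wf; auto. taut.
  - destruct u, v; simpl in *; try contradiction. destruct Hu, Hv.
    pose proof (IHA1 _ _ H H1). pose proof (IHA2 _ _ H0 H2).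
    apply (mp2 _ _ _ H3 H4). simpl; repeat split; apply tr_wf; auto. taut.
  - destruct u, v; simpl in *; try contradiction. destruct Hu, Hv.
    pose proof (IHA1 _ _ H H1). pose proof (IHA2 _ _ H0 H2).
    apply (mp2 _ _ _ H3 H4). simpl; repeat split; apply tr_wf; auto. taut.
  - destruct u, v; simpl in *; try contradiction. destruct Hu, Hv.
    pose proof (IHA1 _ _ H1 H). pose proof (IHA2 _ _ H0 H2).
    apply (mp2 _ _ _ H3 H4). simpl; repeat split; apply tr_wf; auto. taut.
  - destruct u as [| |n u], v as [| |k v]; simpl in *; try contradiction.
    destruct Hu as [Hu Hbu], Hv as [Hv Hbv].
    pose proof (IHA _ _ Hu Hv) as IH.
    set (N := Nat.max n k).
    assert (Bu : boxes_below n (translate A u)) by (apply tr_bb; auto).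
    assert (Bv : boxes_below k (translate A v)) by (apply tr_bb; auto).
    assert (Wu := tr_wf _ _ Hu). assert (Wv := tr_wf _ _ Hv).
    eapply trans; [apply (up_chain _ n N); auto; lia|].
    eapply trans; [|apply (down_chain _ k N); auto; lia].
    eapply GLh_MP; [apply (GLh_nec N _ IH)|].
    + simpl; split; eapply bb_mono; eauto; lia.
    + apply GLh_K. simpl. repeat split; auto; eapply bb_mono; eauto; lia.
Qed.

Theorem lemma3p12 :
  (forall (A : form) (m n : nat), wf A -> boxes_below m A -> boxes_below n A ->
     GLh (Iff (Box m A) (Box n A))) /\
  (forall (A : uform) (u v : wit), is_witness A u -> is_witness A v ->
     GLh (Imp (translate A u) (translate A v))).
Proof.
  split; [exact part1 | exact part2].
Qed.
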